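(* Let $X$ be an infinite-dimensional complex separable Hilbert space, $A\in\mathcal B(X)$, $0<\tau<\infty$, and $\mathcal G\subset X$ countable. If $\{e^{tA^*}g\}_{g\in\mathcal G,\,t\in[0,\tau)}$ is a semi-continuous frame for $X$, then $\mathcal G$ is infinite.
   Context: $e^{tA^*}=\sum_{n\ge0}(tA^* )^n/n!$. The family $\{e^{tA^*}g\}_{g\in\mathcal G,t\in[0,\tau)}$ is a semi-continuous frame if there are $c_1,c_2>0$ with $c_1\|x\|^2\le\sum_{g\in\mathcal G}\int_0^\tau|\langle x,e^{tA^*}g\rangle|^2dt\le c_2\|x\|^2$ for all $x\in X$. *)

(* Defs.v *)
From Stdlib Require Import Reals List ClassicalEpsilon Arith Factorial.
Open Scope R_scope.

Record Cplx := mkC { re : R; im : R }.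
Definition C0 : Cplx := mkC 0 0.
Definition C1 : Cplx := mkC 1 0.
Definition RtoC (r : R) : Cplx := mkC r 0.
Definition Cadd (a b : Cplx) : Cplx := mkC (re a + re b) (im a + im b).
Definition Cmul (a b : Cplx) : Cplx :=
  mkC (re a * re b - im a * im b) (re a * im b + im a * re b).
Definition Cconj (a : Cplx) : Cplx := mkC (re a) (- im a).
Definition Cabs2 (a : Cplx) : R := re a * re a + im a * im a.

Record CHilbert := {
  carrier :> Type;
  vzero : carrier;
  vadd : carrier -> carrier -> carrier;
  vopp : carrier -> carrier;
  vscal : Cplx -> carrier -> carrier;
  inner : carrier -> carrier -> Cplx;
  vadd_assoc : forall x y z, vadd x (vadd y z) = vadd (vadd x y) z;
  vadd_comm : forall x y, vadd x y = vadd y x;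
  vadd_0 : forall x, vadd x vzero = x;
  vadd_opp : forall x, vadd x (vopp x) = vzero;
  vscal_1 : forall x, vscal C1 x = x;
  vscal_mul : forall a b x, vscal a (vscal b x) = vscal (Cmul a b) x;
  vscal_addv : forall a x y, vscal a (vadd x y) = vadd (vscal a x) (vscal a y);
  vscal_addC : forall a b x, vscal (Cadd a b) x = vadd (vscal a x) (vscal b x);
  inner_add : forall x y z, inner (vadd x y) z = Cadd (inner x z) (inner y z);
  inner_scal : forall a x y, inner (vscal a x) y = Cmul a (inner x y);
  inner_conj : forall x y, inner y x = Cconj (inner x y);
  inner_pos : forall x, 0 <= re (inner x x);
  inner_def : forall x, inner x x = C0 -> x = vzero;
  complete : forall u : nat -> carrier,
    (forall eps, eps > 0 -> exists N, forall n m, (n >= N)%nat -> (m >= N)%nat ->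
        sqrt (re (inner (vadd (u n) (vopp (u m))) (vadd (u n) (vopp (u m))))) < eps) ->
    exists l, forall eps, eps > 0 -> exists N, forall n, (n >= N)%nat ->
        sqrt (re (inner (vadd (u n) (vopp l)) (vadd (u n) (vopp l)))) < eps
}.

Arguments vzero {_}.
Arguments vadd {_}.
Arguments vopp {_}.
Arguments vscal {_}.
Arguments inner {_}.

Section HS.
Context {X : CHilbert}.

Definition vnorm (x : X) : R := sqrt (re (inner x x)).
Definition vdist (x y : X) : R := vnorm (vadd x (vopp y)).

Fixpoint lincomb (c : nat -> Cplx) (v : nat -> X) (n : nat) : X :=
  match n with
  | O => vzero
  | S n' => vadd (lincomb c v n') (vscal (c n') (v n'))
  end.

Definition separable : Prop :=
  exists d : nat -> X, forall x eps, eps > 0 -> exists n, vdist x (d n) < eps.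

Definition infinite_dimensional : Prop :=
  forall n : nat, exists v : nat -> X,
    forall c : nat -> Cplx, lincomb c v n = vzero -> forall k, (k < n)%nat -> c k = C0.

Definition bounded_linear (A : X -> X) : Prop :=
  (forall x y, A (vadd x y) = vadd (A x) (A y)) /\
  (forall a x, A (vscal a x) = vscal a (A x)) /\
  (exists M, forall x, vnorm (A x) <= M * vnorm x).

Definition is_adjoint (A B : X -> X) : Prop :=
  forall x y, inner (A x) y = inner x (B y).

Fixpoint exp_partial (T : X -> X) (t : R) (x : X) (N : nat) : X :=
  match N with
  | O => x
  | S N' => vadd (exp_partial T t x N')
                 (vscal (RtoC (t ^ N / INR (fact N))) (Nat.iter N T x))
  end.

Definition is_exp_family (T : X -> X) (E : R -> X -> X) : Prop :=
  forall t x eps, eps > 0 -> exists N0, forall N, (N >= N0)%nat ->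
      vdist (exp_partial T t x N) (E t x) < eps.

Definition countable_set (G : X -> Prop) : Prop :=
  exists h : X -> nat, forall x y, G x -> G y -> h x = h y -> x = y.
Definition infinite_set (G : X -> Prop) : Prop :=
  ~ exists l : list X, forall x, G x -> In x l.

End HS.

(** Riemann integral of f on [a,b] (the integrand here is continuous,
    hence Riemann integrable; the value is independent of the proof) *)
Definition RInt (f : R -> R) (a b : R) : R :=
  epsilon (inhabits 0)
    (fun v => exists pr : Riemann_integrable f a b, RiemannInt pr = v).

Fixpoint list_sum_R {T : Type} (F : T -> R) (l : list T) : R :=
  match l with nil => 0 | cons x l' => F x + list_sum_R F l' end.

(** lo <= sum_{g in G} F g <= hi, for F >= 0, where the (unordered) sum over G
    is the supremum of the finite partial sums. *)
Definition sum_between {T : Type} (G : T -> Prop) (F : T -> R) (lo hi : R) : Prop :=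
  (forall l, NoDup l -> Forall G l -> list_sum_R F l <= hi) /\
  (forall eps, eps > 0 -> exists l, NoDup l /\ Forall G l /\ lo - eps < list_sum_R F l).

Definition semi_continuous_frame {X : CHilbert} (E : R -> X -> X)
    (G : X -> Prop) (tau : R) : Prop :=
  exists c1 c2, 0 < c1 /\ 0 < c2 /\ forall x : X,
    sum_between G (fun g => RInt (fun t => Cabs2 (inner x (E t g))) 0 tau)
      (c1 * (vnorm x)^2) (c2 * (vnorm x)^2).

(* Main.v *)
From Coquelicot Require Import Coquelicot.
From Stdlib Require Import Reals Lra Psatz List Classical ClassicalEpsilon FunctionalExtensionality Arith Lia.
Require Import Defs.
Open Scope R_scope.

Lemma Cext (a b : Cplx) : re a = re b -> im a = im b -> a = b.
Proof. destruct a, b; simpl; intros; subst; reflexivity. Qed.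

Definition Copp (a : Cplx) : Cplx := mkC (- re a) (- im a).
Definition Csub (a b : Cplx) : Cplx := Cadd a (Copp b).

Lemma Cring : ring_theory C0 C1 Cadd Cmul Csub Copp (@eq Cplx).
Proof.
  constructor; intros; apply Cext; unfold Cadd, Cmul, Csub, Copp, C0, C1; simpl; ring.
Qed.
Add Ring Cring_inst : Cring.

Lemma Cconj_add a b : Cconj (Cadd a b) = Cadd (Cconj a) (Cconj b).
Proof. apply Cext; simpl; ring. Qed.
Lemma Cconj_mul a b : Cconj (Cmul a b) = Cmul (Cconj a) (Cconj b).
Proof. apply Cext; simpl; ring. Qed.
Lemma Cconj_conj a : Cconj (Cconj a) = a.
Proof. apply Cext; simpl; ring. Qed.
Lemma Cconj_RtoC r : Cconj (RtoC r) = RtoC r.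
Proof. apply Cext; simpl; ring. Qed.

Lemma Cabs2_ge0 a : 0 <= Cabs2 a.
Proof. unfold Cabs2; nra. Qed.
Lemma Cabs2_mul a b : Cabs2 (Cmul a b) = Cabs2 a * Cabs2 b.
Proof. unfold Cabs2; simpl; ring. Qed.
Lemma Cabs2_0 a : Cabs2 a = 0 -> a = C0.
Proof. unfold Cabs2; intro H; destruct a as [x y]; simpl in *; apply Cext; simpl; nra. Qed.
Lemma Cmul_integral a b : Cmul a b = C0 -> a = C0 \/ b = C0.
Proof.
  intro H. assert (Cabs2 a * Cabs2 b = 0) by (rewrite <- Cabs2_mul, H; unfold Cabs2; simpl; ring).
  destruct (Rmult_integral _ _ H0); [left|right]; apply Cabs2_0; auto.
Qed.

Lemma vadd_cancel_self {X : CHilbert} (y : X) : vadd y y = y -> y = vzero.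
Proof.
  intro H. 
  assert (E : vadd (vadd y y) (vopp y) = vadd y (vopp y)) by (rewrite H; auto).
  rewrite <- vadd_assoc, !vadd_opp, vadd_0 in E. exact E.
Qed.

Lemma vscal_C0 {X : CHilbert} (x : X) : vscal C0 x = vzero.
Proof.
  apply vadd_cancel_self. rewrite <- vscal_addC. f_equal. ring.
Qed.

Lemma vopp_scal {X : CHilbert} (x : X) : vopp x = vscal (RtoC (-1)) x.
Proof.
  assert (E : vadd x (vscal (RtoC (-1)) x) = vzero).
  { rewrite <- (vscal_1 X x) at 1. rewrite <- vscal_addC.
    replace (Cadd C1 (RtoC (-1))) with C0 by (apply Cext; simpl; ring). apply vscal_C0. }
  rewrite <- (vadd_0 X (vopp x)). rewrite <- E. rewrite vadd_assoc.
  rewrite (vadd_comm X (vopp x) x), vadd_opp, vadd_comm, vadd_0. auto.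
Qed.

Lemma inner_0l {X : CHilbert} (w : X) : inner vzero w = C0.
Proof.
  rewrite <- (vscal_C0 vzero), inner_scal. ring.
Qed.

Lemma inner_addr {X : CHilbert} (x y z : X) : inner x (vadd y z) = Cadd (inner x y) (inner x z).
Proof.
  rewrite inner_conj, inner_add, Cconj_add, <- !inner_conj. auto.
Qed.

Lemma inner_scalr {X : CHilbert} a (x y : X) : inner x (vscal a y) = Cmul (Cconj a) (inner x y).
Proof.
  rewrite inner_conj, inner_scal, Cconj_mul, <- inner_conj. auto.
Qed.

Lemma inner_scalr_R {X : CHilbert} r (x y : X) : inner x (vscal (RtoC r) y) = Cmul (RtoC r) (inner x y).
Proof. rewrite inner_scalr, Cconj_RtoC; auto. Qed.

Lemma inner_oppr {X : CHilbert} (x y : X) : inner x (vopp y) = Copp (inner x y).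
Proof. rewrite vopp_scal, inner_scalr_R. apply Cext; simpl; ring. Qed.

Definition nsq {X : CHilbert} (x : X) : R := re (inner x x).

Lemma im_inner_self {X : CHilbert} (x : X) : im (inner x x) = 0.
Proof.
  pose proof (inner_conj X x x) as H. assert (im (inner x x) = im (Cconj (inner x x))) by (rewrite <- H; auto).
  simpl in H0. lra.
Qed.

Lemma nsq_ge0 {X : CHilbert} (x : X) : 0 <= nsq x.
Proof. apply inner_pos. Qed.

Lemma nsq_0 {X : CHilbert} (x : X) : nsq x = 0 -> x = vzero.
Proof.
  intro H. apply inner_def. apply Cext; [exact H| apply im_inner_self].
Qed.

Lemma re_inner_sym {X : CHilbert} (x y : X) : re (inner y x) = re (inner x y).
Proof. rewrite inner_conj. simpl. auto. Qed.

Lemma nsq_expand {X : CHilbert} (x y : X) c :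
  nsq (vadd x (vscal c y)) = nsq x + 2 * re (Cmul (Cconj c) (inner x y)) + Cabs2 c * nsq y.
Proof.
  unfold nsq. rewrite inner_add, !inner_addr, !inner_scal, !inner_scalr.
  rewrite (inner_conj X x y).
  pose proof (im_inner_self y) as Hy.
  unfold Cabs2; simpl. destruct (inner x y) as [p q]; destruct c as [c1 c2]; simpl. rewrite Hy. ring.
Qed.

Lemma CS {X : CHilbert} (x y : X) : Cabs2 (inner x y) <= nsq x * nsq y.
Proof.
  destruct (Req_dec (nsq y) 0) as [H0|H0].
  - rewrite H0. apply nsq_0 in H0. subst y. rewrite inner_conj, inner_0l. unfold Cabs2; simpl. nra.
  - pose proof (nsq_ge0 y) as Hp.
    set (c := Cmul (RtoC (- / nsq y)) (inner x y)).
    pose proof (nsq_ge0 (vadd x (vscal c y))) as H. rewrite nsq_expand in H.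
    unfold c in H. unfold Cabs2 in *. destruct (inner x y) as [p q]. simpl in *.
    assert (Hpos : 0 < nsq y) by lra.
    set (n := nsq y) in *.
    set (k := / n) in *.
    assert (Hk : n * k = 1) by (unfold k; field; lra).
    match type of H with 0 <= ?e => assert (H2 : 0 <= n * e) by (apply Rmult_le_pos; lra);
      replace (n * e) with (n * nsq x - 2 * (n*k) * (p*p+q*q) + (n*k)*(n*k)*(p*p+q*q)) in H2 by ring end.
    rewrite Hk in H2. lra.
Qed.
Definition vn {X : CHilbert} (x : X) := sqrt (nsq x).

Lemma vnorm_eq {X : CHilbert} (x : X) : vnorm x = vn x.
Proof. reflexivity. Qed.

Lemma vn_ge0 {X : CHilbert} (x : X) : 0 <= vn x.
Proof. apply sqrt_pos. Qed.

Lemma vn_sq {X : CHilbert} (x : X) : vn x * vn x = nsq x.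
Proof. apply sqrt_sqrt, nsq_ge0. Qed.

Lemma abs_le_sqrt_aux a b c : 0 <= b -> 0 <= c -> a * a <= b * c -> Rabs a <= sqrt b * sqrt c.
Proof.
  intros Hb Hc H. rewrite <- sqrt_mult by auto.
  rewrite <- sqrt_Rsqr_abs. apply sqrt_le_1_alt. unfold Rsqr. auto.
Qed.

Lemma abs_re_inner {X : CHilbert} (x y : X) : Rabs (re (inner x y)) <= vn x * vn y.
Proof.
  apply abs_le_sqrt_aux; try apply nsq_ge0.
  pose proof (CS x y). unfold Cabs2 in H. pose proof (Rle_0_sqr (im (inner x y))). unfold Rsqr in H0. lra.
Qed.

Lemma abs_im_inner {X : CHilbert} (x y : X) : Rabs (im (inner x y)) <= vn x * vn y.
Proof.
  apply abs_le_sqrt_aux; try apply nsq_ge0.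
  pose proof (CS x y). unfold Cabs2 in H. pose proof (Rle_0_sqr (re (inner x y))). unfold Rsqr in H0. lra.
Qed.

Lemma nsq_scal {X : CHilbert} c (x : X) : nsq (vscal c x) = Cabs2 c * nsq x.
Proof.
  unfold nsq. rewrite inner_scal, inner_scalr. pose proof (im_inner_self x).
  destruct (inner x x) as [p q]; destruct c as [c1 c2]; simpl in *; subst; unfold Cabs2; simpl; ring.
Qed.

Lemma vn_scal_R {X : CHilbert} r (x : X) : vn (vscal (RtoC r) x) = Rabs r * vn x.
Proof.
  unfold vn. rewrite nsq_scal. unfold Cabs2; simpl. rewrite sqrt_mult.
  - f_equal. replace (r * r + 0 * 0) with (Rsqr r) by (unfold Rsqr; ring). apply sqrt_Rsqr_abs.
  - nra.
  - apply nsq_ge0.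
Qed.

Lemma vn_opp {X : CHilbert} (x : X) : vn (vopp x) = vn x.
Proof. rewrite vopp_scal, vn_scal_R, Rabs_left by lra. ring. Qed.

Lemma vn_triangle {X : CHilbert} (x y : X) : vn (vadd x y) <= vn x + vn y.
Proof.
  assert (E : nsq (vadd x y) = nsq x + 2 * re (inner x y) + nsq y).
  { rewrite <- (vscal_1 X y) at 1. rewrite nsq_expand.
    replace (Cmul (Cconj C1) (inner x y)) with (inner x y) by (apply Cext; simpl; ring).
    unfold Cabs2; simpl. ring. }
  pose proof (abs_re_inner x y). pose proof (Rle_abs (re (inner x y))).
  pose proof (vn_ge0 x). pose proof (vn_ge0 y).
  unfold vn at 1. rewrite <- (sqrt_Rsqr (vn x + vn y)) by lra.
  apply sqrt_le_1_alt. rewrite E. unfold Rsqr.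
  rewrite <- (vn_sq x), <- (vn_sq y). nra.
Qed.

Lemma vn_0 {X : CHilbert} (x : X) : vn x = 0 -> x = vzero.
Proof.
  intro H. apply nsq_0. rewrite <- vn_sq, H. ring.
Qed.

Lemma Astar_bound {X : CHilbert} (A Astar : X -> X) :
  bounded_linear A -> is_adjoint A Astar ->
  exists M, 0 <= M /\ forall z, vn (Astar z) <= M * vn z.
Proof.
  intros [_ [_ [M HM]]] Had.
  exists (Rmax M 0). split; [apply Rmax_r|].
  assert (HM' : forall x, vn (A x) <= Rmax M 0 * vn x).
  { intro x. pose proof (HM x). change (vnorm (A x)) with (vn (A x)) in H; change (vnorm x) with (vn x) in H.
    pose proof (vn_ge0 x). pose proof (Rmax_l M 0). nra. }
  intro z. set (w := Astar z).
  assert (E : nsq w = re (inner (A w) z)) by (unfold nsq, w; rewrite Had; auto).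
  pose proof (abs_re_inner (A w) z). pose proof (Rle_abs (re (inner (A w) z))).
  pose proof (HM' w). pose proof (vn_ge0 w). pose proof (vn_ge0 z). pose proof (vn_ge0 (A w)).
  pose proof (Rmax_r M 0).
  rewrite <- vn_sq in E.
  assert (vn w * vn w <= Rmax M 0 * vn w * vn z) by nra.
  destruct (Req_dec (vn w) 0); [rewrite H7; nra|].
  nra.
Qed.

Lemma iter_bound {X : CHilbert} (Astar : X -> X) M :
  0 <= M -> (forall z, vn (Astar z) <= M * vn z) ->
  forall n g, vn (Nat.iter n Astar g) <= M ^ n * vn g.
Proof.
  intros HM H n g. induction n; simpl.
  - lra.
  - pose proof (H (Nat.iter n Astar g)). pose proof (pow_le M n HM). nra.
Qed.
Definition Ssum (B : R) (N : nat) := sum_f_R0 (fun i => / INR (fact i) * B ^ i) N.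

Lemma exp_in_B B : Un_cv (Ssum B) (exp B).
Proof.
  unfold exp. destruct (exist_exp B) as [l Hl]. simpl. exact Hl.
Qed.

Lemma Ssum_le_exp B N : 0 <= B -> Ssum B N <= exp B.
Proof.
  intro HB. apply growing_ineq; [|apply exp_in_B].
  intro n. change (Ssum B (S n)) with (Ssum B n + / INR (fact (S n)) * B ^ (S n)). pose proof (pow_le B (S n) HB).
  pose proof (INR_fact_lt_0 (S n)). assert (0 <= / INR (fact (S n))) by (left; apply Rinv_0_lt_compat; auto). nra.
Qed.

Lemma Un_cv_abs_le (u : nat -> R) l c : Un_cv u l -> (forall k, Rabs (u k) <= c) -> Rabs l <= c.
Proof.
  intros Hu Hb. destruct (Rle_dec (Rabs l) c) as [|Hn]; auto. exfalso.
  destruct (Hu (Rabs l - c)) as [N HN]; [lra|].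
  specialize (HN N (Nat.le_refl N)). unfold R_dist in HN. specialize (Hb N).
  pose proof (Rabs_triang_inv l (u N)). rewrite <- Rabs_Ropp in HN.
  replace (- (u N - l)) with (l - u N) in HN by ring. lra.
Qed.

Lemma sum_zero_upto (f : nat -> R) N : (forall n, (n <= N)%nat -> f n = 0) -> sum_f_R0 f N = 0.
Proof.
  induction N; intro H; simpl.
  - apply H; lia.
  - rewrite IHN by (intros; apply H; lia). rewrite H by lia. ring.
Qed.

Lemma series_facts (α : nat -> R) K M (h : R -> R) :
  0 <= K -> 0 <= M -> (forall n, Rabs (α n) <= K * M ^ n) ->
  (forall t, Un_cv (fun N => sum_f_R0 (fun n => t ^ n / INR (fact n) * α n) N) (h t)) ->
  (forall t, continuity_pt h t) /\
  (forall N T, 0 <= T -> (forall n, (n <= N)%nat -> α n = 0) ->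
     forall t, Rabs t <= T -> Rabs (h t) <= K * (exp (T * M) - Ssum (T * M) N)).
Proof.
  intros HK HM Hα Hh.
  set (ar := fun n => α n / INR (fact n)).
  assert (Hps : forall t, is_pseries ar t (h t)).
  { intro t. apply is_pseries_Reals. unfold Pser, infinite_sum.
    intros eps Heps. destruct (Hh t eps Heps) as [N HN]. exists N. intros n Hn.
    specialize (HN n Hn). rewrite (sum_eq _ (fun n0 : nat => t ^ n0 / INR (fact n0) * α n0)); auto.
    intros i _. unfold ar. field. apply INR_fact_neq_0. }
  assert (Hdisk : forall r, 0 <= r -> CV_disk ar r).
  { intros r Hr. unfold CV_disk.
    apply (@ex_series_le R_AbsRing R_CompleteNormedModule _ (fun n => K * (/ INR (fact n) * (M * r) ^ n))).
    - intro n. change (norm (Rabs (ar n * r ^ n))) with (Rabs (Rabs (ar n * r ^ n))).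
      rewrite Rabs_Rabsolu. unfold ar. rewrite Rabs_mult. unfold Rdiv. rewrite Rabs_mult.
      rewrite (Rabs_pos_eq (/ INR (fact n))) by (left; apply Rinv_0_lt_compat, INR_fact_lt_0).
      rewrite (Rabs_pos_eq (r ^ n)) by (apply pow_le; auto).
      rewrite Rpow_mult_distr. pose proof (Hα n).
      assert (0 <= / INR (fact n)) by (left; apply Rinv_0_lt_compat, INR_fact_lt_0).
      pose proof (pow_le r n Hr).
      replace (K * (/ INR (fact n) * (M ^ n * r ^ n))) with ((K * M ^ n) * / INR (fact n) * r ^ n) by ring.
      apply Rmult_le_compat_r; auto. apply Rmult_le_compat_r; auto.
    - apply (ex_series_scal_l K (fun n => / INR (fact n) * (M * r) ^ n)).
      exists (exp (M * r)). apply is_series_Reals. apply exp_in_B. }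
  assert (Hrad : forall t, Rbar_lt (Rabs t) (CV_radius ar)).
  { intro t. apply Rbar_lt_le_trans with (Rabs t + 1). simpl; lra.
    unfold CV_radius. apply (proj1 (Lub_Rbar_correct (CV_disk ar))).
    apply Hdisk. pose proof (Rabs_pos t); lra. }
  split.
  - intro t. apply continuity_pt_ext with (PSeries ar).
    + intro y. apply is_pseries_unique, Hps.
    + apply PSeries_continuity, Hrad.
  - intros N T HT Hz t Ht.
    set (B := T * M).
    assert (HB : 0 <= B) by (unfold B; nra).
    apply (Un_cv_abs_le _ _ _ (Hh t)).
    intro k.
    assert (Hterm : forall n, Rabs (t ^ n / INR (fact n) * α n) <= K * (/ INR (fact n) * B ^ n)).
    { intro n. rewrite Rabs_mult. unfold Rdiv. rewrite Rabs_mult, <- RPow_abs.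
      rewrite (Rabs_pos_eq (/ INR (fact n))) by (left; apply Rinv_0_lt_compat, INR_fact_lt_0).
      assert (0 <= / INR (fact n)) by (left; apply Rinv_0_lt_compat, INR_fact_lt_0).
      pose proof (Hα n). pose proof (Rabs_pos t).
      assert (Rabs t ^ n * M ^ n <= B ^ n).
      { unfold B. rewrite <- Rpow_mult_distr, Rpow_mult_distr. rewrite <- Rpow_mult_distr.
        apply pow_incr. split. apply Rmult_le_pos; auto. apply Rmult_le_compat_r; auto. }
      pose proof (pow_le (Rabs t) n H1). pose proof (Rabs_pos (α n)).
      apply Rle_trans with (Rabs t ^ n * / INR (fact n) * (K * M ^ n)).
      - apply Rmult_le_compat_l; auto. apply Rmult_le_pos; auto.
      - replace (Rabs t ^ n * / INR (fact n) * (K * M ^ n)) with (K * (/ INR (fact n) * (Rabs t ^ n * M ^ n))) by ring.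
        apply Rmult_le_compat_l; auto. apply Rmult_le_compat_l; auto. }
    assert (Hmain : forall j, Rabs (sum_f_R0 (fun n => t ^ n / INR (fact n) * α n) (N + j)) <= K * (Ssum B (N + j) - Ssum B N)).
    { induction j.
      - rewrite Nat.add_0_r, sum_zero_upto. rewrite Rabs_R0. lra.
        intros n Hn. rewrite Hz by auto. ring.
      - rewrite Nat.add_succ_r. rewrite tech5. unfold Ssum in *. rewrite tech5.
        eapply Rle_trans. apply Rabs_triang.
        pose proof (Hterm (S (N + j))). lra. }
    assert (Hle : Ssum B N <= exp B) by (apply Ssum_le_exp; auto).
    destruct (le_lt_dec k N) as [Hk|Hk].
    + rewrite sum_zero_upto. rewrite Rabs_R0. nra.
      intros n Hn. rewrite Hz by lia. ring.
    + replace k with (N + (k - N))%nat by lia. eapply Rle_trans. apply Hmain.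
      pose proof (Ssum_le_exp B (N + (k - N)) HB). nra.
Qed.
Fixpoint Csum (n : nat) (f : nat -> Cplx) : Cplx :=
  match n with O => C0 | S n' => Cadd (Csum n' f) (f n') end.

Lemma Csum_ext n f g : (forall i, (i < n)%nat -> f i = g i) -> Csum n f = Csum n g.
Proof.
  induction n; intro H; simpl; auto. rewrite IHn by (intros; apply H; lia). rewrite H by lia. auto.
Qed.

Lemma Csum_add n f g : Csum n (fun i => Cadd (f i) (g i)) = Cadd (Csum n f) (Csum n g).
Proof. induction n; simpl. ring. rewrite IHn. ring. Qed.

Lemma Csum_mull n a f : Csum n (fun i => Cmul a (f i)) = Cmul a (Csum n f).
Proof. induction n; simpl. ring. rewrite IHn. ring. Qed.

Lemma Csum_zero n f : (forall i, (i < n)%nat -> f i = C0) -> Csum n f = C0.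
Proof. intro H. rewrite (Csum_ext n f (fun _ => Cmul C0 C0)). rewrite Csum_mull. ring.
  intros; rewrite H by auto; ring. Qed.

Definition skip (j i : nat) : nat := if (i <? j)%nat then i else S i.
Definition unskip (j i : nat) : nat := if (i <? j)%nat then i else pred i.

Lemma Csum_skip j n f : (j <= n)%nat ->
  Cadd (Csum n (fun i => f (skip j i))) (f j) = Csum (S n) f.
Proof.
  intro Hj. replace n with (j + (n - j))%nat by lia. generalize (n - j)%nat as k. intro k.
  induction k.
  - rewrite Nat.add_0_r. simpl. f_equal. apply Csum_ext. intros i Hi. unfold skip.
    destruct (Nat.ltb_spec i j); [auto|lia].
  - rewrite Nat.add_succ_r. change (Csum (S (j + k)) (fun i => f (skip j i))) with
      (Cadd (Csum (j + k) (fun i => f (skip j i))) (f (skip j (j + k)))).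
    change (Csum (S (S (j + k))) f) with (Cadd (Csum (S (j + k)) f) (f (S (j + k)))).
    rewrite <- IHk. unfold skip at 2. destruct (Nat.ltb_spec (j + k) j); [lia|]. ring.
Qed.

Lemma kernel_aux (m : nat) : forall (rows : list (nat -> Cplx)) n, length rows = m -> (m < n)%nat ->
  exists d, (exists i, (i < n)%nat /\ d i <> C0) /\
    forall r, In r rows -> Csum n (fun i => Cmul (d i) (r i)) = C0.
Proof.
  induction m as [|m IH]; intros rows n Hlen Hn.
  - destruct rows; [|simpl in Hlen; lia].
    exists (fun _ => C1). split. exists 0%nat. split. lia.
    intro H. assert (re C1 = re C0) by (rewrite H; auto). simpl in H0. lra.
    intros r [].
  - destruct rows as [|r0 rows]; [simpl in Hlen; lia|]. simpl in Hlen. injection Hlen as Hlen.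
    destruct n as [|n']; [lia|].
    destruct (classic (forall i, (i < S n')%nat -> r0 i = C0)) as [Hall|Hex].
    + destruct (IH rows n') as [d [[i0 [Hi0 Hd]] Hr]]; [auto|lia|].
      set (d' := fun i => if (i <? n')%nat then d i else C0).
      exists d'. split.
      * exists i0. split. lia. unfold d'. destruct (Nat.ltb_spec i0 n'); [auto|lia].
      * intros r [<-|Hin].
        -- apply Csum_zero. intros i Hi. rewrite Hall by auto. ring.
        -- simpl. specialize (Hr r Hin).
           unfold d' at 2. destruct (Nat.ltb_spec n' n'); [lia|].
           rewrite (Csum_ext n' _ (fun i => Cmul (d i) (r i))), Hr. ring.
           intros i Hi. unfold d'. destruct (Nat.ltb_spec i n'); [auto|lia].
    + apply not_all_ex_not in Hex. destruct Hex as [j Hj].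
      apply imply_to_and in Hj. destruct Hj as [Hjn Hj0].
      set (tr := fun (r : nat -> Cplx) => fun i => Csub (Cmul (r0 j) (r (skip j i))) (Cmul (r0 (skip j i)) (r j))).
      destruct (IH (map tr rows) n') as [c [[i0 [Hi0 Hci0]] Hc]].
      { rewrite length_map; auto. } { lia. }
      set (d := fun i => if (i =? j)%nat then Copp (Csum n' (fun k => Cmul (c k) (r0 (skip j k))))
                         else Cmul (r0 j) (c (unskip j i))).
      assert (Key : forall r, Csum (S n') (fun i => Cmul (d i) (r i)) = Csum n' (fun k => Cmul (c k) (tr r k))).
      { intro r. rewrite <- (Csum_skip j n' (fun i => Cmul (d i) (r i))) by lia.
        assert (Hds : forall k, d (skip j k) = Cmul (r0 j) (c k)).
        { intro k. unfold d, skip, unskip. destruct (Nat.ltb_spec k j).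
          - destruct (Nat.eqb_spec k j); [lia|]. destruct (Nat.ltb_spec k j); [auto|lia].
          - destruct (Nat.eqb_spec (S k) j); [lia|]. destruct (Nat.ltb_spec (S k) j); [lia|]. auto. }
        rewrite (Csum_ext n' _ (fun k => Cmul (r0 j) (Cmul (c k) (r (skip j k))))) by (intros; rewrite Hds; ring).
        rewrite Csum_mull.
        unfold tr. rewrite (Csum_ext n' (fun k => Cmul (c k) (Csub (Cmul (r0 j) (r (skip j k))) (Cmul (r0 (skip j k)) (r j))))
           (fun k => Cadd (Cmul (r0 j) (Cmul (c k) (r (skip j k)))) (Cmul (Copp (r j)) (Cmul (c k) (r0 (skip j k)))))) by (intros; unfold Csub; ring).
        rewrite Csum_add, !Csum_mull.
        unfold d. rewrite Nat.eqb_refl. ring. }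
      exists d. split.
      * exists (skip j i0). split.
        -- unfold skip. destruct (Nat.ltb_spec i0 j); lia.
        -- unfold d, skip, unskip. destruct (Nat.ltb_spec i0 j).
           ++ destruct (Nat.eqb_spec i0 j); [lia|]. destruct (Nat.ltb_spec i0 j); [|lia].
              intro HH. apply Cmul_integral in HH. tauto.
           ++ destruct (Nat.eqb_spec (S i0) j); [lia|]. destruct (Nat.ltb_spec (S i0) j); [lia|].
              simpl. intro HH. apply Cmul_integral in HH. tauto.
      * intros r [<-|Hin]; rewrite Key.
        -- apply Csum_zero. intros i Hi. unfold tr, Csub. ring.
        -- apply Hc. apply in_map. auto.
Qed.
Lemma inner_lincomb {X : CHilbert} (c : nat -> Cplx) (v : nat -> X) n w :
  inner (lincomb c v n) w = Csum n (fun i => Cmul (c i) (inner (v i) w)).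
Proof.
  induction n; simpl.
  - apply inner_0l.
  - rewrite inner_add, inner_scal, IHn. auto.
Qed.

Lemma orth_exists {X : CHilbert} (hinf : @infinite_dimensional X) (ws : list X) :
  exists y : X, y <> vzero /\ forall w, In w ws -> inner y w = C0.
Proof.
  destruct (hinf (S (length ws))) as [v Hv].
  destruct (kernel_aux (length ws) (map (fun w => fun i => inner (v i) w) ws) (S (length ws)))
    as [d [[i0 [Hi0 Hd]] Hr]].
  { apply length_map. } { lia. }
  exists (lincomb d v (S (length ws))). split.
  - intro H0. apply Hd. apply (Hv d H0 i0 Hi0).
  - intros w Hw. rewrite inner_lincomb. apply (Hr (fun i => inner (v i) w)).
    apply (in_map (fun w => fun i => inner (v i) w)). auto.
Qed.

Lemma inner_partial {X : CHilbert} (Astar : X -> X) (x g : X) t N :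
  inner x (exp_partial Astar t g N) =
  mkC (sum_f_R0 (fun n => t ^ n / INR (fact n) * re (inner x (Nat.iter n Astar g))) N)
      (sum_f_R0 (fun n => t ^ n / INR (fact n) * im (inner x (Nat.iter n Astar g))) N).
Proof.
  induction N.
  - simpl. apply Cext; simpl; field.
  - change (exp_partial Astar t g (S N)) with
      (vadd (exp_partial Astar t g N) (vscal (RtoC (t ^ (S N) / INR (fact (S N)))) (Nat.iter (S N) Astar g))).
    rewrite inner_addr, inner_scalr_R, IHN. rewrite !tech5. apply Cext; simpl; ring.
Qed.

Lemma partial_cv {X : CHilbert} (Astar : X -> X) (E : R -> X -> X) (hE : is_exp_family Astar E) (x g : X) t :
  Un_cv (fun N => sum_f_R0 (fun n => t ^ n / INR (fact n) * re (inner x (Nat.iter n Astar g))) N) (re (inner x (E t g))) /\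
  Un_cv (fun N => sum_f_R0 (fun n => t ^ n / INR (fact n) * im (inner x (Nat.iter n Astar g))) N) (im (inner x (E t g))).
Proof.
  assert (Hk : forall eps, eps > 0 -> exists N0, forall N, (N >= N0)%nat ->
     Rabs (re (inner x (exp_partial Astar t g N)) - re (inner x (E t g))) < eps /\
     Rabs (im (inner x (exp_partial Astar t g N)) - im (inner x (E t g))) < eps).
  { intros eps Heps. pose proof (vn_ge0 x).
    destruct (hE t g (eps / (vn x + 1))) as [N0 HN0].
    { apply Rlt_gt, Rdiv_lt_0_compat; lra. }
    exists N0. intros N HN. specialize (HN0 N HN). unfold vdist in HN0.
    change (vnorm (vadd (exp_partial Astar t g N) (vopp (E t g)))) with (vn (vadd (exp_partial Astar t g N) (vopp (E t g)))) in HN0.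
    pose proof (abs_re_inner x (vadd (exp_partial Astar t g N) (vopp (E t g)))) as H1.
    pose proof (abs_im_inner x (vadd (exp_partial Astar t g N) (vopp (E t g)))) as H2.
    rewrite inner_addr, inner_oppr in H1, H2. simpl in H1, H2.
    pose proof (vn_ge0 (vadd (exp_partial Astar t g N) (vopp (E t g)))).
    assert (vn x * vn (vadd (exp_partial Astar t g N) (vopp (E t g))) < eps).
    { apply Rle_lt_trans with ((vn x + 1) * vn (vadd (exp_partial Astar t g N) (vopp (E t g)))). nra.
      replace eps with ((vn x + 1) * (eps / (vn x + 1))) by (field; lra).
      apply Rmult_lt_compat_l; lra. }
    split; unfold Rminus; lra. }
  split; intros eps Heps; destruct (Hk eps Heps) as [N0 HN0]; exists N0; intros N HN;
    specialize (HN0 N HN); rewrite inner_partial in HN0; simpl in HN0; unfold R_dist; tauto.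
Qed.

Lemma list_sum_bound {T : Type} (F : T -> R) (l : list T) b :
  (forall g, In g l -> F g <= b) -> list_sum_R F l <= INR (length l) * b.
Proof.
  induction l; intro H; cbn [list_sum_R length].
  - simpl; lra.
  - rewrite S_INR. pose proof (H a (or_introl eq_refl)). pose proof (IHl (fun g Hg => H g (or_intror Hg))). lra.
Qed.

Lemma list_sum_nonneg_le {X : CHilbert} (l : list X) g : In g l -> nsq g <= list_sum_R (fun g => nsq g) l.
Proof.
  induction l; simpl; [tauto|]. assert (0 <= list_sum_R (fun g => nsq g) l).
  { clear. induction l; simpl. lra. pose proof (nsq_ge0 a). lra. }
  intros [<-|H1]. pose proof (nsq_ge0 a); lra. pose proof (IHl H1). pose proof (nsq_ge0 a); lra.
Qed.

Lemma RInt_le_const (f : R -> R) a b c : a <= b -> (forall t, a <= t <= b -> continuity_pt f t) ->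
  (forall t, a <= t <= b -> f t <= c) -> Defs.RInt f a b <= c * (b - a).
Proof.
  intros Hab Hc Hb.
  pose proof (continuity_implies_RiemannInt Hab Hc) as pr.
  unfold Defs.RInt.
  destruct (epsilon_spec (inhabits 0) (fun v => exists pr : Riemann_integrable f a b, RiemannInt pr = v))
    as [pr' Hpr']. { exists (RiemannInt pr). exists pr. auto. }
  rewrite <- Hpr'.
  assert (prc : Riemann_integrable (fun _ => c) a b).
  { apply continuity_implies_RiemannInt; auto. intros t _. apply continuity_pt_const. intros u v; auto. }
  rewrite <- (RiemannInt_const c a b prc).
  apply RiemannInt_P19; auto. intros; apply Hb; lra.
Qed.
Theorem corollary3p7 (X : CHilbert) (hsep : @separable X)
    (hinf : @infinite_dimensional X)
    (A : X -> X) (hA : bounded_linear A)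
    (Astar : X -> X) (hAstar : is_adjoint A Astar)
    (E : R -> X -> X) (hE : is_exp_family Astar E)
    (tau : R) (htau : 0 < tau)
    (G : X -> Prop) (hG : countable_set G)
    (hframe : semi_continuous_frame E G tau) :
  infinite_set G.
Proof.
  intros [l HL].
  destruct hframe as [c1 [c2 [Hc1 [Hc2 Hfr]]]].
  destruct (Astar_bound A Astar hA hAstar) as [M [HM HMb]].
  set (m := length l).
  set (Gs := list_sum_R (fun g => nsq g) l).
  assert (HGs : 0 <= Gs).
  { unfold Gs. clear. induction l; simpl. lra. pose proof (nsq_ge0 a). lra. }
  set (Ctot := 2 * INR m * tau * Gs).
  assert (HCt : 0 <= Ctot) by (unfold Ctot; pose proof (pos_INR m); apply Rmult_le_pos; [nra|auto]).
  set (delta := Rmin 1 (c1 / (4 * (Ctot + 1)))).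
  assert (Hdel : 0 < delta) by (unfold delta; apply Rmin_glb_lt; [lra|apply Rdiv_lt_0_compat; lra]).
  assert (Hdel1 : delta <= 1) by apply Rmin_l.
  assert (Hdel2 : delta * (4 * (Ctot + 1)) <= c1).
  { pose proof (Rmin_r 1 (c1 / (4 * (Ctot + 1)))). fold delta in H.
    apply Rle_trans with (c1 / (4 * (Ctot + 1)) * (4 * (Ctot + 1))).
    apply Rmult_le_compat_r; lra. right; field; lra. }
  set (B := tau * M).
  assert (HB : 0 <= B) by (unfold B; nra).
  destruct (exp_in_B B delta Hdel) as [N HN].
  specialize (HN N (Nat.le_refl N)). unfold R_dist in HN.
  pose proof (Ssum_le_exp B N HB) as HSle.
  set (r := exp B - Ssum B N).
  assert (Hr0 : 0 <= r) by (unfold r; lra).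
  assert (Hr1 : r < delta).
  { unfold r. rewrite Rabs_minus_sym, Rabs_pos_eq in HN by lra. lra. }
  set (ws := flat_map (fun g => map (fun k => Nat.iter k Astar g) (seq 0 (S N))) l).
  destruct (orth_exists hinf ws) as [y [Hy0 Hyw]].
  assert (Hny : 0 < nsq y).
  { pose proof (nsq_ge0 y). destruct (Req_dec (nsq y) 0); [|lra]. exfalso. apply Hy0, nsq_0; auto. }
  assert (Hint : forall g, In g l ->
     Defs.RInt (fun t => Cabs2 (inner y (E t g))) 0 tau <= nsq y * nsq g * (2 * delta) * tau).
  { intros g Hg.
    assert (Hz : forall n, (n <= N)%nat -> inner y (Nat.iter n Astar g) = C0).
    { intros n Hn. apply Hyw. unfold ws. apply in_flat_map. exists g. split; auto.
      apply (in_map (fun k => Nat.iter k Astar g)). apply in_seq. lia. }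
    set (K := vn y * vn g).
    assert (HK : 0 <= K) by (unfold K; pose proof (vn_ge0 y); pose proof (vn_ge0 g); nra).
    assert (Hre : forall n, Rabs (re (inner y (Nat.iter n Astar g))) <= K * M ^ n).
    { intro n. eapply Rle_trans. apply abs_re_inner. unfold K.
      pose proof (iter_bound Astar M HM HMb n g). pose proof (vn_ge0 y). nra. }
    assert (Him : forall n, Rabs (im (inner y (Nat.iter n Astar g))) <= K * M ^ n).
    { intro n. eapply Rle_trans. apply abs_im_inner. unfold K.
      pose proof (iter_bound Astar M HM HMb n g). pose proof (vn_ge0 y). nra. }
    destruct (series_facts _ K M (fun t => re (inner y (E t g))) HK HM Hre
       (fun t => proj1 (partial_cv Astar E hE y g t))) as [Hcre Hbre].
    destruct (series_facts _ K M (fun t => im (inner y (E t g))) HK HM Him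
       (fun t => proj2 (partial_cv Astar E hE y g t))) as [Hcim Hbim].
    assert (HK2 : K * K = nsq y * nsq g).
    { unfold K. replace (vn y * vn g * (vn y * vn g)) with ((vn y * vn y) * (vn g * vn g)) by ring.
      rewrite !vn_sq. auto. }
    eapply Rle_trans.
    - apply (RInt_le_const _ 0 tau (2 * (K * r) * (K * r))).
      + lra.
      + intros t _. unfold Cabs2. apply continuity_pt_plus; apply continuity_pt_mult; auto.
      + intros t Ht.
        assert (Ht' : Rabs t <= tau) by (rewrite Rabs_pos_eq; lra).
        pose proof (Hbre N tau (Rlt_le _ _ htau) (fun n Hn => f_equal re (Hz n Hn)) t Ht').
        pose proof (Hbim N tau (Rlt_le _ _ htau) (fun n Hn => f_equal im (Hz n Hn)) t Ht').
        fold B in H, H0. fold r in H, H0.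
        unfold Cabs2.
        pose proof (Rsqr_abs (re (inner y (E t g)))) as H1. pose proof (Rsqr_abs (im (inner y (E t g)))) as H2.
        unfold Rsqr in H1, H2. pose proof (Rabs_pos (re (inner y (E t g)))). pose proof (Rabs_pos (im (inner y (E t g)))).
        nra.
    - replace (2 * (K * r) * (K * r) * (tau - 0)) with ((K * K) * (2 * (r * r)) * tau) by ring.
      rewrite HK2. apply Rmult_le_compat_r; [lra|]. apply Rmult_le_compat_l.
      + apply Rmult_le_pos; apply nsq_ge0.
      + nra. }
  destruct (Hfr y) as [_ Hlow].
  destruct (Hlow (c1 * nsq y / 2)) as [l' [Hnd [HF Hlt]]].
  { apply Rlt_gt. apply Rmult_lt_0_compat; [nra|lra]. }
  assert (Hvn : vnorm y ^ 2 = nsq y).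
  { change (vnorm y) with (vn y). simpl. rewrite Rmult_1_r. apply vn_sq. }
  rewrite Hvn in Hlt.
  assert (Hincl : incl l' l).
  { intros g Hg. apply HL. rewrite Forall_forall in HF. auto. }
  pose proof (NoDup_incl_length Hnd Hincl) as Hlen.
  pose proof (list_sum_bound (fun g => Defs.RInt (fun t => Cabs2 (inner y (E t g))) 0 tau) l'
      (nsq y * Gs * (2 * delta) * tau)) as Hsum.
  assert (Hsum' : list_sum_R (fun g => Defs.RInt (fun t => Cabs2 (inner y (E t g))) 0 tau) l' <=
                  INR (length l') * (nsq y * Gs * (2 * delta) * tau)).
  { apply Hsum. intros g Hg. eapply Rle_trans. apply Hint. apply Hincl; auto.
    pose proof (list_sum_nonneg_le l g (Hincl g Hg)). fold Gs in H.
    apply Rmult_le_compat_r; [lra|]. apply Rmult_le_compat_r; [lra|].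
    apply Rmult_le_compat_l; [lra|auto]. }
  apply le_INR in Hlen. fold m in Hlen.
  assert (Hpos : 0 <= nsq y * Gs * (2 * delta) * tau).
  { apply Rmult_le_pos; [|lra]. apply Rmult_le_pos; [|lra]. apply Rmult_le_pos; lra. }
  assert (INR (length l') * (nsq y * Gs * (2 * delta) * tau) <= INR m * (nsq y * Gs * (2 * delta) * tau))
    by (apply Rmult_le_compat_r; auto).
  assert (Heq : INR m * (nsq y * Gs * (2 * delta) * tau) = nsq y * (delta * Ctot)) by (unfold Ctot; ring).
  assert (delta * Ctot <= c1 / 4) by nra.
  nra.
Qed.
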